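(* Let $G$ be a complex, simply-connected, simple Lie group with Borel subgroup $B$, maximal torus $\mathbb{T}\subset B$, simple roots $\Delta$ and Weyl group $W$ with Bruhat order $\le$ and longest element $w_0$. For any parabolic subgroup $P\supseteq B$ (with corresponding $\Delta_P\subsetneq\Delta$ and $w_P$ the longest element of $W_P$) we have $\Gamma(w_0w_P)=\Delta$.
   Context: $W_P$ is the subgroup of $W$ generated by $s_\alpha$, $\alpha\in\Delta_P$. For $v\in W$, $\Gamma(v):=\{\alpha\in\Delta\mid s_\alpha\le v\}$, where $s_\alpha$ is the simple reflection associated with $\alpha$. *)

(* Defs.v *)
(* Weyl group of a simple Lie algebra, realized from its
   Cartan matrix as the group generated by the simple reflections acting on
   the root lattice (coordinates w.r.t. the simple roots). *)
From HB Require Import structures.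
From mathcomp Require Import all_boot all_order all_algebra.
Set Implicit Arguments.
Unset Strict Implicit.
Unset Printing Implicit Defensive.
Import Order.TTheory GRing.Theory Num.Theory.
Local Open Scope ring_scope.

Section Weyl.
Variable n : nat.
Implicit Types (A : 'M[int]_n).

Definition finite_type_cartan A : Prop :=
  [/\ forall i, A i i = 2,
      forall i j, i != j -> A i j <= 0,
      forall i j, A i j = 0 <-> A j i = 0
    & exists d : 'I_n -> rat,
        [/\ forall i, 0 < d i,
            forall i j, d i * (A i j)%:~R = d j * (A j i)%:~R
          & forall x : 'I_n -> rat, (exists i, x i != 0) ->
              0 < \sum_i \sum_j x i * d i * (A i j)%:~R * x j]].

(* indecomposable Cartan matrix (connected Dynkin diagram) <-> simple *)
Definition indecomposable A : Prop :=
  forall S : {set 'I_n}, S != set0 -> S != setT ->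
    exists i j, [/\ i \in S, j \notin S & A i j != 0].

(* simple reflection s_i : alpha_j |-> alpha_j - a_ij alpha_i *)
Definition refl A (i : 'I_n) : 'M[int]_n :=
  \matrix_(k, j) ((k == j)%:R - (k == i)%:R * A i j).

Definition word A (s : seq 'I_n) : 'M[int]_n :=
  foldr (fun i M => refl A i *m M) 1%:M s.

Definition in_W A (w : 'M[int]_n) : Prop := exists s, word A s = w.

Definition reduced A (s : seq 'I_n) : Prop :=
  forall s', word A s' = word A s -> (size s <= size s')%N.

Definition length_of A (w : 'M[int]_n) (k : nat) : Prop :=
  exists s, [/\ word A s = w, size s = k & reduced A s].

(* reflections: conjugates w s_i w^-1 of simple reflections *)
Definition reflection A (t : 'M[int]_n) : Prop :=
  exists s i, t = word A (s ++ i :: rev s).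

Definition bruhat_step A (u v : 'M[int]_n) : Prop :=
  exists t, [/\ reflection A t, v = u *m t &
    exists k l, [/\ length_of A u k, length_of A v l & (k < l)%N]].

Inductive bruhat_le A : 'M[int]_n -> 'M[int]_n -> Prop :=
| bruhat_refl u : bruhat_le A u u
| bruhat_trans u v w : bruhat_le A u v -> bruhat_step A v w -> bruhat_le A u w.

(* longest element of the parabolic subgroup W_J (J = setT gives w_0) *)
Definition longest_in A (J : {set 'I_n}) (w : 'M[int]_n) : Prop :=
  exists s, [/\ word A s = w, all (mem J) s, reduced A s &
    forall s', all (mem J) s' -> reduced A s' -> (size s' <= size s)%N].

(* Gamma(v) = { alpha in Delta | s_alpha <= v } *)
(* as a predicate on Delta = 'I_n (Bruhat order is Prop-valued) *)
Definition Gamma A (v : 'M[int]_n) (i : 'I_n) : Prop :=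
  bruhat_le A (refl A i) v.

End Weyl.

(* Main.v *)
Require Import Defs.
From mathcomp Require Import all_boot all_order all_algebra.
From mathcomp Require Import zify ring lra perm fingroup.
From Stdlib Require Import Classical ClassicalEpsilon.
Set Implicit Arguments. Unset Strict Implicit. Unset Printing Implicit Defensive.
Import Order.TTheory GRing.Theory Num.Theory.
Local Open Scope ring_scope.

Lemma ex_min (P : nat -> Prop) : (exists k, P k) -> exists k, P k /\ forall m, P m -> (k <= m)%N.
Proof.
move=> [k0 Pk0]; apply: NNPP => Hno.
have H : forall k m, (m <= k)%N -> ~ P m.
  elim=> [|k IH] m.
    rewrite leqn0 => /eqP -> P0; apply: Hno; exists 0%N; split=> //.
  rewrite leq_eqVlt => /orP [/eqP ->|]; last by apply: IH.
  move=> Pk; apply: Hno; exists k.+1; split=> // m' Pm'.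
  by rewrite ltnNge; apply/negP => /IH.
exact: (H k0 k0 (leqnn _) Pk0).
Qed.

Lemma sum_delr n (F : 'I_n -> int) j : \sum_l F l * (l == j)%:R = F j.
Proof.
rewrite (bigD1 j) //= eqxx mulr1 big1 ?addr0 // => l /negbTE ->; by rewrite mulr0.
Qed.
Lemma sum_dell n (F : 'I_n -> int) j : \sum_l (j == l)%:R * F l = F j.
Proof.
rewrite (bigD1 j) //= eqxx mul1r big1 ?addr0 // => l; rewrite eq_sym => /negbTE ->; by rewrite mul0r.
Qed.

Section W.
Variable n : nat.
Variable A : 'M[int]_n.

Lemma refl_mulE m i (M : 'M[int]_(n, m)) k j :
  (refl A i *m M) k j = M k j - (k == i)%:R * \sum_l A i l * M l j.
Proof.
rewrite !mxE.
under eq_bigr do rewrite mxE mulrBl.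
rewrite sumrB sum_dell mulr_sumr; congr (_ - _); apply: eq_bigr => l _.
by rewrite mulrA.
Qed.

Lemma mul_reflE m i (M : 'M[int]_(m, n)) k j :
  (M *m refl A i) k j = M k j - M k i * A i j.
Proof.
rewrite !mxE.
under eq_bigr do rewrite mxE mulrBr.
rewrite sumrB sum_delr; congr (_ - _).
under eq_bigr do rewrite mulrA.
by rewrite -mulr_suml sum_delr.
Qed.
Hypothesis Adiag : forall i, A i i = 2.

Lemma refl_invol i : refl A i *m refl A i = 1%:M.
Proof.
apply/matrixP=> k j; rewrite mul_reflE !mxE Adiag.
case: (k =P i) => [->|_]; rewrite ?mul1r ?mul0r ?subr0 //.
case: (i =P j) => _; lia.
Qed.

Lemma word_cons x s : word A (x :: s) = refl A x *m word A s.
Proof. by []. Qed.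

Lemma word_cat s t : word A (s ++ t) = word A s *m word A t.
Proof.
elim: s => [|x s IH] /=; first by rewrite mul1mx.
by rewrite IH mulmxA.
Qed.

Lemma word1 x : word A [:: x] = refl A x.
Proof. by rewrite /= mulmx1. Qed.

Lemma word_rcons s x : word A (rcons s x) = word A s *m refl A x.
Proof. by rewrite -cats1 word_cat word1. Qed.

Lemma word_rev s : word A s *m word A (rev s) = 1%:M.
Proof.
elim: s => [|x s IH]; first by rewrite /= mulmx1.
rewrite rev_cons word_rcons word_cons !mulmxA -(mulmxA _ _ (word A (rev s))) IH.
by rewrite mulmx1 refl_invol.
Qed.

Lemma word_rev' s : word A (rev s) *m word A s = 1%:M.
Proof. by have := word_rev (rev s); rewrite revK. Qed.

Lemma det_refl i : \det (refl A i) = -1.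
Proof.
rewrite /determinant (bigD1 (1%g : {perm 'I_n})) //=.
rewrite [X in _ + X = _]big1 ?addr0.
  rewrite odd_perm1 expr0 mul1r (bigD1 i) //= big1 ?mulr1.
    by rewrite perm1 !mxE eqxx Adiag mul1r.
  move=> k nk; rewrite perm1 !mxE eqxx (negbTE nk) mul0r; lia.
move=> s ns.
have [k [nki sk]] : exists k, k != i /\ s k != k.
  have [k sk] : exists k, s k != k.
    apply/existsP; move: ns; apply: contraR; rewrite negb_exists => /forallP H.
    by apply/eqP/permP => k; rewrite perm1; move/negPn/eqP: (H k).
  case: (k =P i) => [ki|/eqP nki]; last by exists k.
  exists (s k); split; first by rewrite -ki.
  by apply: contra sk => /eqP /perm_inj /eqP.
apply/eqP; rewrite mulf_eq0; apply/orP; right; apply/prodf_eq0; exists k => //.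
by rewrite !mxE (negbTE nki) mul0r subr0 [k == _]eq_sym (negbTE sk).
Qed.

Lemma det_word s : \det (word A s) = (-1) ^+ size s.
Proof.
elim: s => [|x s IH] /=; first by rewrite det1.
by rewrite det_mulmx IH det_refl exprS.
Qed.

Lemma word_odd s s' : word A s = word A s' -> odd (size s) = odd (size s').
Proof.
move=> E; have := det_word s; rewrite E det_word -signr_odd -(signr_odd _ (size s)).
by move/signr_inj.
Qed.


Definition lenP (w : 'M[int]_n) k := exists s, word A s = w /\ size s = k.

Definition L (w : 'M[int]_n) : nat :=
  match excluded_middle_informative (exists k, lenP w k) with
  | left H => proj1_sig (constructive_indefinite_description _ (ex_min H))
  | right _ => 0%N
  end.

Lemma L_spec s : lenP (word A s) (L (word A s)) /\ forall k, lenP (word A s) k -> (L (word A s) <= k)%N.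
Proof.
rewrite /L; case: excluded_middle_informative => [H|[]]; last by exists (size s), s.
by case: constructive_indefinite_description.
Qed.

Lemma L_le s : (L (word A s) <= size s)%N.
Proof. by apply: (proj2 (L_spec s)); exists s. Qed.

Lemma L_min s : exists r, word A r = word A s /\ size r = L (word A s).
Proof. exact: (proj1 (L_spec s)). Qed.

Lemma L_le' s s' : word A s' = word A s -> (L (word A s) <= size s')%N.
Proof. by move=> E; apply: (proj2 (L_spec s)); exists s'. Qed.

Lemma reducedP s : reduced A s <-> L (word A s) = size s.
Proof.
split=> [R|E].
  apply/eqP; rewrite eqn_leq L_le /=; have [r [Er Sr]] := L_min s.
  by rewrite -Sr; apply: R.
by move=> s' E'; rewrite -E; apply: L_le'.
Qed.

Lemma L_min_red s : exists r, word A r = word A s /\ reduced A r.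
Proof.
have [r [Er Sr]] := L_min s; exists r; split=> //.
by apply/reducedP; rewrite Er.
Qed.

Lemma L_mul p q : (L (word A p *m word A q) <= L (word A p) + size q)%N.
Proof.
have [r [Er Sr]] := L_min p.
rewrite -word_cat; apply: leq_trans (L_le' (s' := r ++ q) _) _.
  by rewrite !word_cat Er.
by rewrite size_cat Sr.
Qed.

Lemma L_refl_ne p j : L (word A p *m refl A j) <> L (word A p).
Proof.
have [r [Er Sr]] := L_min p.
have [r' [Er' Sr']] := L_min (rcons p j).
move: Sr'; rewrite word_rcons => Sr' E.
have := word_odd (s := rcons r j) (s' := r'); rewrite word_rcons Er Er' -word_rcons.
move/(_ erefl); rewrite size_rcons Sr Sr' E /=; by case: odd.
Qed.

Lemma L_refl_le p j : (L (word A p *m refl A j) <= (L (word A p)).+1)%N.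
Proof. by have := L_mul p [:: j]; rewrite word1 addn1. Qed.

Lemma L_refl_ge p j : (L (word A p) <= (L (word A p *m refl A j)).+1)%N.
Proof.
have := L_mul (rcons p j) [:: j]; rewrite word1 word_rcons -mulmxA refl_invol mulmx1 addn1.
by [].
Qed.


Section Rank2.
Variables s t : 'I_n.
Hypothesis st : s != t.

Definition letter (c : bool) := if c then s else t.

Fixpoint altw (c : bool) (k : nat) : seq 'I_n :=
  if k is k'.+1 then letter c :: altw (~~ c) k' else [::].

Definition stepG (a b ps pt : int) (c : bool) (p : int * int) : int * int :=
  if c then (- p.1 - a * p.2 - ps, p.2) else (p.1, - p.2 - b * p.1 - pt).

Fixpoint G (a b ps pt : int) (c : bool) (k : nat) : int * int :=
  if k is k'.+1 then stepG a b ps pt c (G a b ps pt (~~ c) k') else (0, 0).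

Lemma altw_rep c k r j :
  word A (altw c k) r j = (r == j)%:R + (r == s)%:R * (G (A s t) (A t s) (A s j) (A t j) c k).1
     + (r == t)%:R * (G (A s t) (A t s) (A s j) (A t j) c k).2.
Proof.
elim: k c r => [|k IH] c r /=.
  by rewrite mxE !mulr0 !addr0.
rewrite refl_mulE.
have -> : \sum_l A (letter c) l * word A (altw (~~ c) k) l j =
   A (letter c) j + A (letter c) s * (G (A s t) (A t s) (A s j) (A t j) (~~ c) k).1
   + A (letter c) t * (G (A s t) (A t s) (A s j) (A t j) (~~ c) k).2.
  under eq_bigr do rewrite IH !mulrDr.
  rewrite !big_split /= sum_delr.
  under eq_bigr do rewrite mulrA.
  rewrite -mulr_suml sum_delr.
  under eq_bigr do rewrite mulrA.
  by rewrite -mulr_suml sum_delr.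
rewrite IH.
case: c => /=; rewrite Adiag.
  case: (r =P s) => [->|_]; rewrite ?(negbTE st) /=; lia.
case: (r =P t) => [->|_]; rewrite ?(eq_sym t s) ?(negbTE st) /=; lia.
Qed.


Definition inI (l : 'I_n) := (l == s) || (l == t).

Lemma letter_inI c : inI (letter c).
Proof. by case: c; rewrite /inI /letter eqxx ?orbT. Qed.

Lemma letter_eqs c : (letter c == s) = c.
Proof. by case: c; rewrite /letter ?eqxx // eq_sym (negbTE st). Qed.

Lemma altw_cat c p q : altw c (p + q) = altw c p ++ altw (if odd p then ~~ c else c) q.
Proof.
elim: p c => [|p IH] c //=.
by rewrite IH; case: (odd p); rewrite ?negbK.
Qed.

Lemma altw_last d c k : last d (altw c k.+1) = letter (if odd k then ~~ c else c).
Proof.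
elim: k c d => [|k IH] c d //.
have -> : last d (altw c k.+2) = last (letter c) (altw (~~ c) k.+1) by [].
rewrite IH /=; by case: (odd k); rewrite ?negbK.
Qed.

Lemma altw_size c k : size (altw c k) = k.
Proof. by elim: k c => //= k IH c; rewrite IH. Qed.

Lemma altw_inI c k : all inI (altw c k).
Proof. by elim: k c => //= k IH c; rewrite letter_inI IH. Qed.

Lemma alt_struct x : all inI x -> (forall p u q, x = p ++ u :: u :: q -> False) ->
  x = altw (head t x == s) (size x).
Proof.
elim: x => [|u x IH] //= /andP [Iu Ix] Hna.
have Hx : x = altw (head t x == s) (size x).
  apply: IH => // p u' q E; apply: (Hna (u :: p) u' q); by rewrite E.
have -> : letter (u == s) = u.

  by move: Iu; rewrite /inI /letter; case: (u =P s) => [->|_] //= /eqP.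
congr (_ :: _).
case: x Hx Hna Ix {IH} => [|u' x] //= Hx Hna /andP [Iu' _].
have nu : u' != u by apply/eqP => E; apply: (Hna [::] u x); rewrite E.
suff E : (u' == s) = (u != s) by rewrite {1}Hx E.
move: Iu Iu' nu; rewrite /inI.
case: (u =P s) => [->|_]; case: (u' =P s) => [->|_] //=; rewrite ?eqxx //.
by move=> /eqP -> /eqP ->; rewrite eqxx.
Qed.

Lemma rank2 (m : nat) (m0 : (0 < m)%N)
  (braid : word A (altw true m) = word A (altw false m))
  (pos : forall c k, (k < m)%N -> last t (altw c k) != s ->
      0 <= 1 + (G (A s t) (A t s) (A s s) (A t s) c k).1 /\
      0 <= (G (A s t) (A t s) (A s s) (A t s) c k).2)
  x : all inI x ->
  (forall y, all inI y -> word A y = word A x -> (size x <= size y)%N) ->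
  (forall y, all inI y -> word A y = word A x -> size y = size x -> last t y != s) ->
  forall r, 0 <= word A x r s /\ (r != s -> r != t -> word A x r s = 0).
Proof.
move=> Ix H1 H2.
have Hna : forall p u q, x = p ++ u :: u :: q -> False.
  move=> p u q E; have := H1 (p ++ q).
  have -> : all inI (p ++ q).
    by move: Ix; rewrite E !all_cat /= => /and3P [-> _ /andP [_ ->]].
  rewrite E !word_cat !word_cons [refl A u *m (refl A u *m _)]mulmxA refl_invol mul1mx => /(_ erefl).
  move/(_ erefl); rewrite !size_cat /= !addnS; lia.
have Ex := alt_struct Ix Hna.
set c := (head t x == s) in Ex; set k := size x in Ex.
have [mk|km] := leqP m k.
  exfalso.
  have Ek : k = ((k - m) + m)%N by rewrite subnK.
  set c' := (if odd (k - m) then ~~ c else c).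
  have Ex' : x = altw c (k - m) ++ altw c' m by rewrite Ex {1}Ek altw_cat.
  set y := altw c (k - m) ++ altw (~~ c') m.
  have Hy : last t y != s.
    apply: H2.
    - by rewrite all_cat !altw_inI.
    - rewrite Ex' !word_cat; congr (_ *m _).
      by case: (c'); rewrite /= ?braid.
    - by rewrite Ex' !size_cat !altw_size.
  have Hx : last t x != s by apply: H2.
  move: Hx Hy; rewrite /y Ex' !last_cat.
  case: (m) m0 => // m' _; rewrite !altw_last !letter_eqs.
  by case: (odd m'); case: (c').
have Lx : last t x != s by apply: H2.
have [P1 P2] := pos c k km ltac:(by rewrite -Ex).
move=> r; rewrite Ex altw_rep.
case: (r =P s) => [->|/eqP nrs].
  by rewrite (negbTE st) /= mul1r mul0r addr0.
have [Ert|nrt] := eqVneq r t.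
  by rewrite /= mul0r add0r mul1r.
by rewrite !mul0r !addr0.
Qed.

Lemma braid_G m : (forall ps pt, G (A s t) (A t s) ps pt true m = G (A s t) (A t s) ps pt false m) ->
  word A (altw true m) = word A (altw false m).
Proof. by move=> H; apply/matrixP=> r j; rewrite !altw_rep H. Qed.

Lemma pos_of m (a b : int) (Ea : A s t = a) (Eb : A t s = b)
  (H : forall c k, (k < m)%N -> (k == 0)%N || ~~ (if odd k.-1 then ~~ c else c) ->
     0 <= 1 + (G a b 2 b c k).1 /\ 0 <= (G a b 2 b c k).2) :
  forall c k, (k < m)%N -> last t (altw c k) != s ->
      0 <= 1 + (G (A s t) (A t s) (A s s) (A t s) c k).1 /\
      0 <= (G (A s t) (A t s) (A s s) (A t s) c k).2.
Proof.
move=> c [|k] km; rewrite Ea Eb Adiag; first by move=> _; apply: H.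
by rewrite altw_last letter_eqs => hk; apply: H.
Qed.

End Rank2.


Lemma sum2 (T : nmodType) s t (F : 'I_n -> T) : s != t ->
  (forall l, l != s -> l != t -> F l = 0) -> \sum_l F l = F s + F t.
Proof.
move=> st H; rewrite (bigD1 s) //= (bigD1 t) //=; last by rewrite eq_sym.
rewrite big1 ?addr0 // => l /andP [ls lt]; exact: H.
Qed.

Lemma prod_lt4 s t : finite_type_cartan A -> s != t -> A s t * A t s < 4.
Proof.
case=> _ _ _ [d [dpos dsym dpd]] st.
pose x l : rat := if l == s then - (A s t)%:~R else if l == t then 2 else 0.
have xs : x s = - (A s t)%:~R by rewrite /x eqxx.
have xt : x t = 2 by rewrite /x eq_sym (negbTE st) eqxx.
have x0 : forall l, l != s -> l != t -> x l = 0.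
  by move=> l /negbTE ls /negbTE lt; rewrite /x ls lt.
have := dpd x; rewrite (sum2 st); last first.
  by move=> l ls lt; apply: big1 => j _; rewrite x0 // !mul0r.
rewrite (sum2 st); last by move=> l ls lt; rewrite (x0 l) // mulr0.
rewrite (sum2 st); last by move=> l ls lt; rewrite (x0 l) // mulr0.
rewrite xs xt !Adiag => /(_ (ex_intro _ t _)).
rewrite xt => /(_ isT).
have dt := dpos t.
rewrite -(ltr_int rat) intrM.
set a := (A s t)%:~R; set b := (A t s)%:~R.
move=> H.
have E : 0 < d t * (8 - 2 * (a * b)).
  by move: H; congr (_ < _); ring.
rewrite pmulr_rgt0 // in E.
lra.
Qed.



Lemma rank2_data s t : finite_type_cartan A -> s != t ->
  exists m, [/\ (0 < m)%N, word A (altw s t true m) = word A (altw s t false m) &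
   forall c k, (k < m)%N -> last t (altw s t c k) != s ->
      0 <= 1 + (G (A s t) (A t s) (A s s) (A t s) c k).1 /\
      0 <= (G (A s t) (A t s) (A s s) (A t s) c k).2].
Proof.
move=> HA st; have P4 := prod_lt4 HA st.
case: HA => _ Hneg Hz _.
have n1 := Hneg _ _ st; have n2 : A t s <= 0 by apply: Hneg; rewrite eq_sym.
have [z1 z2] := Hz s t.
have : (A s t = 0 /\ A t s = 0) \/ (A s t = -1 /\ A t s = -1) \/
       (A s t = -1 /\ A t s = -2) \/ (A s t = -2 /\ A t s = -1) \/
       (A s t = -1 /\ A t s = -3) \/ (A s t = -3 /\ A t s = -1).
  case: (A s t =P 0) => [h|/eqP h]; first by left; split => //; apply: z1.
  have h' : A t s != 0 by apply/eqP => /z2 /eqP; rewrite (negbTE h).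
  right; nia.
have Hb : forall m, (forall ps pt, G (A s t) (A t s) ps pt true m = G (A s t) (A t s) ps pt false m) ->
  word A (altw s t true m) = word A (altw s t false m) by move=> m; apply: braid_G.
case=> [[Ea Eb]|[[Ea Eb]|[[Ea Eb]|[[Ea Eb]|[[Ea Eb]|[Ea Eb]]]]]].
- exists 2%N; split => //; first by apply: Hb => ps pt; rewrite Ea Eb /=; f_equal; ring.
  apply: (pos_of st Ea Eb) => c k km; case: c; do 2? [case: k km => [|k] km] => //= _; split; lia.
- exists 3%N; split => //; first by apply: Hb => ps pt; rewrite Ea Eb /=; f_equal; ring.
  apply: (pos_of st Ea Eb) => c k km; case: c; do 3? [case: k km => [|k] km] => //= _; split; lia.
- exists 4%N; split => //; first by apply: Hb => ps pt; rewrite Ea Eb /=; f_equal; ring.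
  apply: (pos_of st Ea Eb) => c k km; case: c; do 4? [case: k km => [|k] km] => //= _; split; lia.
- exists 4%N; split => //; first by apply: Hb => ps pt; rewrite Ea Eb /=; f_equal; ring.
  apply: (pos_of st Ea Eb) => c k km; case: c; do 4? [case: k km => [|k] km] => //= _; split; lia.
- exists 6%N; split => //; first by apply: Hb => ps pt; rewrite Ea Eb /=; f_equal; ring.
  apply: (pos_of st Ea Eb) => c k km; case: c; do 6? [case: k km => [|k] km] => //= _; split; lia.
- exists 6%N; split => //; first by apply: Hb => ps pt; rewrite Ea Eb /=; f_equal; ring.
  apply: (pos_of st Ea Eb) => c k km; case: c; do 6? [case: k km => [|k] km] => //= _; split; lia.
Qed.

Hypothesis HA : finite_type_cartan A.

Lemma pos_root p j : (L (word A p) < L (word A p *m refl A j))%N -> forall k, 0 <= word A p k j.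
Proof.
move: {2}(L (word A p)) (erefl (L (word A p))) => l.
elim/ltn_ind: l p j => l IH p j Ep Hj k.
have [r [Er Sr]] := L_min p.
case: (lastP r) Er Sr => [|r' t] Er Sr.
  by move: Er; rewrite /= => <-; rewrite mxE; case: (k == j).
rewrite size_rcons Ep in Sr.
have Ew : word A p = word A r' *m refl A t by rewrite -Er word_rcons.
have Lr' : L (word A r') = l.-1.
  apply/eqP; rewrite eqn_leq; apply/andP; split.
    by rewrite -Sr /=; apply: L_le.
  have H := L_refl_le r' t; rewrite -Ew in H; by rewrite Ep -Sr in H; rewrite -Sr.
have tj : t != j.
  apply/eqP => E; move: Hj; rewrite Ep Ew E -mulmxA refl_invol mulmx1 Lr'.
  by rewrite -Sr /= => /ltnW; rewrite ltnn.
pose Aset (v : 'M[int]_n) (x : seq 'I_n) :=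
  [/\ exists q, v = word A q, all (inI j t) x, word A p = v *m word A x &
      (L v + size x)%N = l].
have [k0 [[v0 [x0 [[[q0 Eq0] Ix0 Ep0 Ls0] Lv0]]] Hmin]] :
    exists k0, (exists v x, Aset v x /\ L v = k0) /\
      forall k1, (exists v x, Aset v x /\ L v = k1) -> (k0 <= k1)%N.
  apply: ex_min; exists (L (word A r')), (word A r'), [:: t]; split=> //; split=> //.
  - by exists r'.
  - by rewrite /= /inI eqxx orbT.
  - by rewrite word1.
  - by rewrite Lr' -Sr /= addn1.
subst v0.
have Hk0 : (k0 < l)%N.
  apply: (@leq_ltn_trans (L (word A r'))); last by rewrite Lr' -Sr.
  apply: Hmin; exists (word A r'), [:: t]; split=> //; split=> //.
  - by exists r'.
  - by rewrite /= /inI eqxx orbT.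
  - by rewrite word1.
  - by rewrite Lr' addn1 -Sr.
have up : forall z, inI j t z -> (L (word A q0) < L (word A q0 *m refl A z))%N.
  move=> z Iz; rewrite ltnNge; apply/negP => H.
  have Hlt : (L (word A q0 *m refl A z) < L (word A q0))%N.
    by rewrite ltn_neqAle H andbT; apply/eqP/L_refl_ne.
  have := L_refl_ge q0 z => Hge.
  have := Hlt; rewrite Lv0 ltnNge => /negP; apply; apply: Hmin.
  exists (word A q0 *m refl A z), (z :: x0); split=> //; split.
  - by exists (rcons q0 z); rewrite word_rcons.
  - by rewrite /= Iz.
  - by rewrite Ep0 word_cons -mulmxA (mulmxA (refl A z)) refl_invol mul1mx.
  - rewrite /= addnS -addSn -Ls0; congr (_ + _)%N; apply/eqP; rewrite eqn_leq Hge andbT.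
    exact: Hlt.
have Pj : forall k, 0 <= word A q0 k j.
  by apply: (IH k0 Hk0 q0 j Lv0 (up j _)); rewrite /inI eqxx.
have Pt : forall k, 0 <= word A q0 k t.
  by apply: (IH k0 Hk0 q0 t Lv0 (up t _)); rewrite /inI eqxx orbT.
have jt : j != t by rewrite eq_sym.
have [m [m0 braid pos]] := rank2_data HA jt.
have R2 := rank2 (s := j) (t := t) jt m0 braid pos Ix0.
have H1 : forall y, all (inI j t) y -> word A y = word A x0 -> (size x0 <= size y)%N.
  move=> y _ Ey; rewrite -(leq_add2l (L (word A q0))) Ls0 -Ep Ep0 -Ey.
  exact: L_mul.
have H2 : forall y, all (inI j t) y -> word A y = word A x0 -> size y = size x0 -> last t y != j.
  move=> y _ Ey Sy; apply/negP => Ly.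
  case: (lastP y) Ey Sy Ly => [|y' z] Ey Sy Ly; first by move: Ly; rewrite /= (negbTE tj).
  rewrite last_rcons in Ly; move/eqP: Ly => Ly; subst z.
  have E : word A p *m refl A j = word A q0 *m word A y'.
    by rewrite Ep0 -Ey word_rcons -!mulmxA refl_invol mulmx1.
  have := L_mul q0 y'; rewrite -E.
  move: Hj Sy; rewrite size_rcons Ep; lia.
rewrite Ep0 mxE; apply: sumr_ge0 => r0 _.
have [rj|nrj] := eqVneq r0 j; first by rewrite rj; apply: mulr_ge0; [apply: Pj | apply: (proj1 (R2 H1 H2 j))].
have [rt|nrt] := eqVneq r0 t; first by rewrite rt; apply: mulr_ge0; [apply: Pt | apply: (proj1 (R2 H1 H2 t))].
by rewrite (proj2 (R2 H1 H2 r0)) // mulr0.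
Qed.


Lemma no_pos_comb (J : {set 'I_n}) (c : 'I_n -> int) i :
  indecomposable A -> J != setT -> (forall k, k \notin J -> c k = 0) ->
  (forall j, (i == j)%:R <= \sum_l c l * A l j) -> False.
Proof.
move=> Hind HJ Hc Hy.
case: HA => _ Hneg _ [d [dpos dsym dpd]].
pose y j := \sum_l c l * A l j.
pose z l : rat := (c l)%:~R / d l.
have dne : forall l, d l != 0 by move=> l; rewrite gt_eqF.
have Ey : forall j, (y j)%:~R = d j * \sum_l (A j l)%:~R * z l.
  move=> j; rewrite /y rmorph_sum mulr_sumr; apply: eq_bigr => l _.
  rewrite rmorphM /= mulrA -(dsym l j) /z; field; exact: dne l.
have y0 : forall j, 0 <= y j by move=> j; apply: le_trans (Hy j); case: (i == j).
have Hoff : forall j l, j != l -> (A j l)%:~R <= (0 : rat) by move=> j l /Hneg; rewrite lerz0.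
pose zm l : rat := if z l < 0 then - z l else 0.
have zm0 : forall l, 0 <= zm l by move=> l; rewrite /zm; case: ltrP => // h; rewrite oppr_ge0 ltW.
have zpos : forall l, 0 <= z l.
  apply/forallP; apply: contraT; rewrite negb_forall => /existsP [l0 hl0].
  have : (exists l, zm l != 0) by exists l0; rewrite /zm ltNge hl0 /= oppr_eq0; apply: contra hl0 => /eqP ->.
  move/dpd => Q.
  have S0 : 0 <= \sum_j zm j * (y j)%:~R by apply: sumr_ge0 => j _; rewrite mulr_ge0 // ler0z.
  have : \sum_j zm j * (y j)%:~R + \sum_j \sum_l zm j * d j * (A j l)%:~R * zm l <= 0.
    rewrite -big_split /=; apply: sumr_le0 => j _.
    rewrite Ey mulr_sumr mulr_sumr -big_split /=; apply: sumr_le0 => l _.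
    have -> : zm j * (d j * ((A j l)%:~R * z l)) + zm j * d j * (A j l)%:~R * zm l =
              zm j * d j * (A j l)%:~R * (z l + zm l) by ring.
    have [-> | jl] := eqVneq j l.
      rewrite /zm; case: ltrP => h; first by rewrite addrN mulr0.
      by rewrite mul0r !mul0r.
    apply: mulr_le0_ge0; last by rewrite /zm; case: ltrP => h; rewrite ?addrN ?addr0.
    by apply: mulr_ge0_le0; [apply: mulr_ge0 => //; apply: ltW | apply: Hoff].
  lra.
pose Z := [set l | z l == 0].
have [k0 k0J] : exists k, k \notin J.
  by apply/existsP; move: HJ; apply: contraR; rewrite negb_exists => /forallP H; apply/eqP/setP => k; rewrite inE; move/negPn: (H k).
have Zk0 : k0 \in Z by rewrite inE /z Hc // mul0r.
have ZN0 : Z != set0 by apply/set0Pn; exists k0.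
have [ZT | ZnT] := eqVneq Z setT.
  have := Hy i; rewrite eqxx -/(y i) -(ler_int rat) Ey big1 ?mulr0 //.
  move=> l _; have : l \in Z by rewrite ZT inE.
  by rewrite inE => /eqP ->; rewrite mulr0.
have [a [b [aZ bZ Aab]]] := Hind Z ZN0 ZnT.
have ab : a != b by apply: contraNneq bZ => <-.
have za : z a = 0 by move: aZ; rewrite inE => /eqP.
have zb : 0 < z b by rewrite lt_def zpos andbT; move: bZ; rewrite inE.
have Aab' : (A a b)%:~R < (0 : rat).
  by rewrite lt_def Hoff // andbT eq_sym intr_eq0.
have : (y a)%:~R < (0 : rat).
  rewrite Ey pmulr_rlt0 // (bigD1 b) //=.
  have T : (A a b)%:~R * z b < 0 by rewrite pmulr_llt0.
  have R : \sum_(l | l != b) (A a l)%:~R * z l <= 0.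
    apply: sumr_le0 => l _.
    have [<- | al] := eqVneq a l; first by rewrite za mulr0.
    by apply: mulr_le0_ge0; [apply: Hoff | apply: zpos].
  lra.
by rewrite ltrz0 ltNge y0.
Qed.

End W.

Section W2.
Variable n : nat.
Variable A : 'M[int]_n.
Hypothesis Adiag : forall i, A i i = 2.
Hypothesis HA : finite_type_cartan A.

Lemma neg_root p j : (L A (word A p *m refl A j) < L A (word A p))%N -> forall k, word A p k j <= 0.
Proof.
move=> H k.
have H' : (L A (word A (rcons p j)) < L A (word A (rcons p j) *m refl A j))%N.
  by rewrite word_rcons -mulmxA (refl_invol Adiag) mulmx1.
have := pos_root Adiag HA H' k; rewrite word_rcons mul_reflE Adiag.
lia.
Qed.

Lemma reduced_factor a b c : reduced A (a ++ b ++ c) -> reduced A b.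
Proof.
move=> R b' E; have := R (a ++ b' ++ c); rewrite !word_cat E -!word_cat => /(_ erefl).
by rewrite !size_cat leq_add2l leq_add2r.
Qed.

Lemma bruhat_trans' u v w : bruhat_le A u v -> bruhat_le A v w -> bruhat_le A u w.
Proof.
move=> H1 H2; elim: H2 H1 => // v1 v2 v3 _ IH st H1.
exact: (bruhat_trans (IH H1) st).
Qed.

Lemma chain_prefix p q : reduced A (p ++ q) -> bruhat_le A (word A p) (word A (p ++ q)).
Proof.
elim/last_ind: q => [|q x IH] R; first by rewrite cats0; apply: bruhat_refl.
have R' : reduced A (p ++ q) by apply: (reduced_factor (a := [::]) (c := [:: x])); rewrite /= -catA cats1.
apply: (bruhat_trans (IH R')).
exists (refl A x); split.
- by exists [::], x; rewrite /= mulmx1.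
- by rewrite -rcons_cat word_rcons.
- exists (size (p ++ q)), (size (p ++ rcons q x)); split.
  + by exists (p ++ q).
  + by exists (p ++ rcons q x); split => //; rewrite rcons_cat word_rcons.
  + by rewrite -rcons_cat size_rcons.
Qed.

Lemma chain_suffix a q : reduced A (a ++ q) -> bruhat_le A (word A q) (word A (a ++ q)).
Proof.
elim: a => [|x a IH] R; first by apply: bruhat_refl.
have R' : reduced A (a ++ q) by apply: (reduced_factor (a := [:: x]) (c := [::])); rewrite cats0.
apply: (bruhat_trans (IH R')).
exists (word A (rev (a ++ q) ++ x :: (a ++ q))); split.
- by exists (rev (a ++ q)), x; rewrite revK.
- by rewrite (word_cat A (rev (a ++ q))) mulmxA (word_rev Adiag) mul1mx.
- exists (size (a ++ q)), (size (x :: a ++ q)); split.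
  + by exists (a ++ q).
  + by exists (x :: a ++ q).
  + by [].
Qed.

Lemma row_avoid i r : i \notin r -> forall j, word A r i j = (i == j)%:R.
Proof.
elim: r => [|x r IH] /=; first by move=> _ j; rewrite mxE.
rewrite in_cons negb_or => /andP [ix ir] j.
by rewrite refl_mulE (negbTE ix) mul0r subr0 IH.
Qed.

Lemma row_Jword (J : {set 'I_n}) i y : all (mem J) y ->
  exists c : 'I_n -> int, (forall k, k \notin J -> c k = 0) /\
     forall j, word A y i j = (i == j)%:R - \sum_l c l * A l j.
Proof.
elim/last_ind: y => [|y x IH].
  by move=> _; exists (fun _ => 0); split => // j; rewrite big1 ?subr0 ?mxE // => l _; rewrite mul0r.
rewrite all_rcons => /andP [xJ yJ]; have [c [cJ Ec]] := IH yJ.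
exists (fun l => c l + (l == x)%:R * word A y i x); split.
  move=> k kJ; rewrite cJ // add0r; case: (k =P x) => [E|_]; last by rewrite mul0r.
  move: kJ.
  by rewrite E => /negP H; exfalso; apply: H; exact: xJ.
move=> j; rewrite word_rcons mul_reflE Ec.
have -> : \sum_l (c l + (l == x)%:R * word A y i x) * A l j =
    \sum_l c l * A l j + word A y i x * A x j.
  rewrite (eq_bigr (fun l => c l * A l j + (l == x)%:R * (word A y i x * A l j))); last first.
    by move=> l _; ring.
  rewrite big_split /=; congr (_ + _).
  rewrite (bigD1 x) //= eqxx mul1r big1 ?addr0 // => l /negbTE ->; by rewrite mul0r.
ring.
Qed.

End W2.


Theorem lemma3p7 (n : nat) (A : 'M[int]_n) (J : {set 'I_n})
  (w0 wP : 'M[int]_n) :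
  (0 < n)%N -> finite_type_cartan A -> indecomposable A ->
  J != setT ->
  longest_in A setT w0 -> longest_in A J wP ->
  forall i : 'I_n, Gamma A (w0 *m wP) i.
Proof.
move=> _ HA Hind HJ [s0 [Ew0 _ Rs0 Max0]] [sP [EwP IJ _ _]] i.
have Adiag : forall i, A i i = 2 by case: HA.
have [r [Er Rr]] := L_min_red A (s0 ++ sP).
rewrite /Gamma -Ew0 -EwP -word_cat -Er.
case: (boolP (i \in r)) => Hi.
  move: Rr; case/splitPr: Hi => a c Rr.
  apply: (bruhat_trans' (v := word A (i :: c))).
    have := chain_prefix (A := A) (p := [:: i]) (q := c).
    rewrite word1; apply.
    by apply: (reduced_factor (a := a) (c := [::])); rewrite cats0.
  exact: chain_suffix.
exfalso.
have Ew0' : word A s0 = word A r *m word A (rev sP).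
  by rewrite Er word_cat -mulmxA (word_rev Adiag) mulmx1.
have IJ' : all (mem J) (rev sP) by rewrite all_rev.
have [c [cJ Ec]] := row_Jword A i IJ'.
have Hneg : forall j, word A s0 i j <= 0.
  move=> j; apply: (neg_root Adiag HA).
  have Ls0 : L A (word A s0) = size s0 by apply/reducedP.
  have := L_refl_ne Adiag (p := s0) (j := j); rewrite Ls0.
  case: ltngtP => // H _.
  have [p [Ep Rp]] := L_min_red A (rcons s0 j).
  have Sp : size p = L A (word A s0 *m refl A j) by rewrite -word_rcons -Ep; apply/esym/reducedP.
  have Hall : all (mem [set: 'I_n]) p by apply/allP => x _; rewrite inE.
  by have := Max0 p Hall Rp; rewrite Sp leqNgt H.
apply: (no_pos_comb HA Hind HJ cJ (i := i)) => j.
have := Hneg j; rewrite Ew0' mxE.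
rewrite (eq_bigr (fun l => (i == l)%:R * word A (rev sP) l j)); last first.
  by move=> l _; rewrite (row_avoid A Hi).
rewrite sum_dell Ec; lra.
Qed.
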